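(* Let $\alpha\in(0,1]$ and $a,b\in\mathbb{R}$ with $0\le a<b$. Let $g:[a,b]\to[0,1]$ be $\alpha$-fractional integrable on $[a,b]$, and define $$ \ell:=\frac{\alpha(b-a)}{b^\alpha-a^\alpha}\int_a^b g(t)\,d_\alpha t. $$ Then $\ell\in[0,b-a]$ and $$ \int_{b-\ell}^b 1\,d_\alpha t\le\int_a^b g(t)\,d_\alpha t\le\int_a^{a+\ell}1\,d_\alpha t. $$
   Context: For $\alpha\in(0,1]$ and $0\le a<b$, $\int_a^b f(t)\,d_\alpha t:=\int_a^b f(t)\,t^{\alpha-1}\,dt$, and $f$ is called $\alpha$-fractional integrable on $[a,b]$ if this integral exists and is finite. *)

(* Defs.v *)
From HB Require Import structures.
From mathcomp Require Import all_boot all_order all_algebra.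
From mathcomp Require Import all_classical all_reals all_analysis.
Set Implicit Arguments. Unset Strict Implicit. Unset Printing Implicit Defensive.
Import Order.TTheory GRing.Theory Num.Theory.
Import numFieldNormedType.Exports.
Local Open Scope classical_set_scope.
Local Open Scope ring_scope.

Definition frac_integrand {R : realType} (alpha : R) (f : R -> R) (t : R) : \bar R :=
  (f t * t `^ (alpha - 1))%:E.

Definition frac_integrable {R : realType} (alpha a b : R) (f : R -> R) : Prop :=
  (@lebesgue_measure R).-integrable `[a, b] (frac_integrand alpha f).

(* int_a^b f(t) d_alpha t = int_a^b f(t) t^(alpha-1) dt (real value) *)
Definition frac_int {R : realType} (alpha a b : R) (f : R -> R) : R :=
  fine (\int[@lebesgue_measure R]_(t in `[a, b]) frac_integrand alpha f t).

(* Main.v *)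
Require Import Defs.
From HB Require Import structures.
From mathcomp Require Import all_boot all_order all_algebra.
From mathcomp Require Import all_classical all_reals all_analysis.
From mathcomp Require Import measurable_realfun.
From mathcomp Require Import ring lra.
Import Order.TTheory GRing.Theory Num.Theory.
Import numFieldNormedType.Exports.
Local Open Scope classical_set_scope.
Local Open Scope ring_scope.

Lemma concave_pow (R : realType) (al s u v : R) : 0 < al -> al <= 1 ->
  0 <= s -> s <= 1 -> 0 <= u -> 0 <= v ->
  s * u `^ al + (1 - s) * v `^ al <= (s * u + (1 - s) * v) `^ al.
Proof.
move=> a0 a1 s0 s1 u0 v0.
have p1 : 1 <= al^-1 by rewrite invf_ge1.
have := @convex_powR R _ p1 (Itv01 s0 s1) (u `^ al) (v `^ al).
have m1 : u `^ al \in (`[0, +oo[%classic : set R) by rewrite inE /= in_itv /= andbT powR_ge0.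
have m2 : v `^ al \in (`[0, +oo[%classic : set R) by rewrite inE /= in_itv /= andbT powR_ge0.
move=> /(_ m1 m2).
rewrite !convRE /= -!powRrM mulfV ?gt_eqF // !powRr1 // => H.
have X0 : 0 <= s * u `^ al + (1 - s) * v `^ al.
  by rewrite addr_ge0 // mulr_ge0 ?powR_ge0 ?subr_ge0.
have := ge0_ler_powR (ltW a0) _ _ H.
rewrite -powRrM mulVf ?gt_eqF // powRr1 //; apply.
- by rewrite nnegrE powR_ge0.
- by rewrite nnegrE addr_ge0 // mulr_ge0 ?subr_ge0.
Qed.

Section S.
Variable R : realType.
Let mu := @lebesgue_measure R.

Lemma cont_pow (p x : R) : 0 < x -> {for x, continuous (fun t : R => t `^ p)}.
Proof.
move=> x0.
apply/differentiable_continuous/derivable1_diffP.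
by apply: derivable_powR; rewrite in_itv /= andbT.
Qed.

Lemma ftc_pos (al x y : R) : 0 < al -> 0 < x -> x < y ->
  (\int[mu]_(t in `[x, y]) (t `^ (al - 1))%:E = ((y `^ al - x `^ al) / al)%:E)%E.
Proof.
move=> a0 x0 xy.
have -> : ((y `^ al - x `^ al) / al = y `^ al / al - x `^ al / al) by rewrite mulrBl.
apply: (@continuous_FTC2 R (fun t => t `^ (al - 1)) (fun t => t `^ al / al)).
- exact: xy.
- apply/continuous_in_subspaceT => t; rewrite inE /= in_itv /= => /andP[xt _].
  exact: cont_pow _ _ (lt_le_trans x0 xt).
- split.
  + move=> t; rewrite in_itv /= => /andP[xt _].
    by apply: derivableM => //; apply: derivable_powR; rewrite in_itv /= andbT (lt_trans x0 xt).
  + apply: cvg_at_right_filter.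
    apply: cvgMr_tmp; exact: cont_pow.
  + apply: cvg_at_left_filter.
    apply: cvgMr_tmp; exact: cont_pow _ _ (lt_trans x0 xy).
- move=> t; rewrite in_itv /= => /andP[xt _].
  have t0 : 0 < t := lt_trans x0 xt.
  rewrite derive1E deriveM //=; last by apply: derivable_powR; rewrite in_itv /= andbT.
  rewrite derive_cst scaler0 add0r -derive1E powR_derive1 ?in_itv /= ?andbT //.
  by rewrite scalerA mulVf ?gt_eqF // scale1r.
Qed.
End S.

Section S2.
Variable R : realType.
Let mu := @lebesgue_measure R.

Lemma mpow (p : R) (D : set R) : measurable D ->
  measurable_fun D (EFin \o (@powR R ^~ p)).
Proof.
move=> mD; apply/measurable_EFinP; apply: measurable_funTS.
exact: measurable_powR.
Qed.

Lemma int0_pow (al y : R) : 0 < al -> 0 < y ->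
  (\int[mu]_(t in `[0%R, y]) (t `^ (al - 1))%:E = ((y `^ al) / al)%:E)%E.
Proof.
move=> a0 y0.
pose u n : R := y * harmonic n.+1.
have u0 n : 0 < u n by rewrite mulr_gt0 // harmonic_gt0.
have uy n : u n < y.
  rewrite /u /= gtr_pMr // invf_lt1 // ltr1n //.
have ucvg : u n @[n --> \oo] --> 0.
  rewrite -(mulr0 y); apply: cvgMl_tmp.
  rewrite (cvg_shiftS (@harmonic R)); exact: cvg_harmonic.
pose F n := `[u n, y]%classic.
have nndF : nondecreasing_seq F.
  apply/nondecreasing_seqP => n; rewrite subsetEset => t; rewrite /F /= !in_itv /= => /andP[ht ->].
  rewrite andbT (le_trans _ ht) // /u /= ler_pM2l // lef_pV2 ?posrE // ler_nat //.
have UF : \bigcup_n F n = `]0, y]%classic.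
  apply/seteqP; split => t /=.
    move=> [n _]; rewrite /F /= !in_itv /= => /andP[ht ->]; rewrite andbT.
    exact: lt_le_trans (u0 n) ht.
  rewrite in_itv /= => /andP[t0 ty].
  exists (Num.bound (y / t)) => //; rewrite /F /= in_itv /= ty andbT.
  rewrite /u /= ler_pdivrMr // mulrC -ler_pdivrMr //.
  apply: (le_trans (ltW (archi_boundP _))); first by rewrite divr_ge0 // ltW.
  by rewrite ler_nat ltnW.
have H1 := @ge0_nondecreasing_set_cvg_integral _ (measurableTypeR R) R F (fun t => (t `^ (al - 1))%:E) (@lebesgue_measure R) nndF
  (fun i => measurable_itv _) (fun i => mpow _ _ (measurable_itv _))
  (fun i t _ => powR_ge0 t (al - 1)).
rewrite UF in H1.
have H2 : (((y `^ al - u n `^ al) / al)%:E)%E @[n --> \oo] --> ((y `^ al / al)%:E)%E.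
  have -> : y `^ al / al = (y `^ al - 0) / al by rewrite subr0.
  apply: cvg_EFin; first exact: nearW.
  apply: cvgMr_tmp; apply: cvgB; first exact: cvg_cst.
  apply: (cvg_at_rightP (fun x => x `^ al) 0 0).1; last by split.
  exact: powR_cvg0.
have E : (fun n => \int[mu]_(t in F n) (t `^ (al - 1))%:E)%E =
    (fun n => ((y `^ al - u n `^ al) / al)%:E)%E.
  by apply: funext => n; rewrite /F ftc_pos.
rewrite /= E in H1.
rewrite -integral_itv_obnd_cbnd; last exact: mpow.
exact: (cvg_unique _ H1 H2).
Qed.

Lemma int_pow (al x y : R) : 0 < al -> 0 <= x -> x <= y ->
  (\int[mu]_(t in `[x, y]) (t `^ (al - 1))%:E = ((y `^ al - x `^ al) / al)%:E)%E.
Proof.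
move=> a0 x0; rewrite le_eqVlt => /predU1P[<-|xy].
  by rewrite set_itv1 integral_set1 subrr mul0r.
move: x0; rewrite le_eqVlt => /predU1P[x0|x0]; last exact: ftc_pos.
subst x; rewrite int0_pow //.
have -> : 0 `^ al = 0 :> R by rewrite powR0 // gt_eqF.
by rewrite subr0.
Qed.

Lemma frac_int1 (al x y : R) : 0 < al -> 0 <= x -> x <= y ->
  frac_int al x y (fun=> 1) = (y `^ al - x `^ al) / al.
Proof.
move=> a0 x0 xy; rewrite /frac_int /frac_integrand.
under eq_integral do rewrite mul1r.
by rewrite int_pow.
Qed.
End S2.

Theorem mainTheorem4 (R : realType) (alpha a b : R) (g : R -> R) :
  0 < alpha -> alpha <= 1 -> 0 <= a -> a < b ->
  (forall t, a <= t <= b -> 0 <= g t <= 1) ->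
  frac_integrable alpha a b g ->
  let l := alpha * (b - a) / (b `^ alpha - a `^ alpha) * frac_int alpha a b g in
  (0 <= l <= b - a) /\
  frac_int alpha (b - l) b (fun=> 1) <= frac_int alpha a b g /\
  frac_int alpha a b g <= frac_int alpha a (a + l) (fun=> 1).
Proof.
move=> a0 a1 ha ab hg hint l.
have b0 : 0 < b := le_lt_trans ha ab.
have Bab : a `^ alpha < b `^ alpha by apply: (gt0_ltr_powR a0); rewrite ?nnegrE ?(ltW b0).
pose J := (b `^ alpha - a `^ alpha) / alpha.
have J0 : 0 < J by rewrite divr_gt0 // subr_gt0.
pose X := (\int[@lebesgue_measure R]_(t in `[a, b]) frac_integrand alpha g t)%E.
have mX : measurable_fun `[a, b] (frac_integrand alpha g).
  exact: measurable_int hint.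
have X0 : (0 <= X)%E.
  apply: integral_ge0 => t; rewrite /= in_itv /= => /hg /andP[g0 _].
  by rewrite lee_fin mulr_ge0 // powR_ge0.
have XJ : (X <= J%:E)%E.
  rewrite /J -(@int_pow R alpha a b a0 ha (ltW ab)) /X; apply: ge0_le_integral => //.
  - move=> t; rewrite /= in_itv /= => /hg /andP[g0 _].
    by rewrite lee_fin mulr_ge0 // powR_ge0.
  - exact: mpow.
  - move=> t; rewrite /= in_itv /= => /hg /andP[g0 g1].
    by rewrite lee_fin ler_piMl // powR_ge0.
have Xfin : X \is a fin_num by rewrite ge0_fin_numE // (le_lt_trans XJ) // ltry.
have I0 : 0 <= frac_int alpha a b g by rewrite /frac_int -/X fine_ge0.
have IJ : frac_int alpha a b g <= J.
  by rewrite /frac_int -/X -lee_fin fineK.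
set I := frac_int alpha a b g in I0 IJ l *.
pose s := I / J.
have s0 : 0 <= s by rewrite divr_ge0 // ltW.
have s1 : s <= 1 by rewrite ler_pdivrMr // mul1r.
have IE : I = s * J by rewrite /s divfK // gt_eqF.
have lE : l = s * (b - a).
  rewrite /l /s /J invf_div; field.
  by rewrite gt_eqF // subr_gt0.
have ba0 : 0 <= b - a by rewrite subr_ge0 ltW.
have l0 : 0 <= l by rewrite lE mulr_ge0.
have lba : l <= b - a by rewrite lE ler_piMl.
split; first by rewrite l0 lba.
split.
- rewrite frac_int1 // ?gerBl //; last by rewrite subr_ge0 (le_trans lba) // gerBl.
  rewrite IE /J mulrA; apply: ler_wpM2r; first by rewrite invr_ge0 ltW.
  have s0' : 0 <= 1 - s by rewrite subr_ge0.
  have s1' : 1 - s <= 1 by rewrite gerBl.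
  have := @concave_pow R alpha _ _ _ a0 a1 s0' s1' (ltW b0) ha.
  have -> : (1 - s) * b + (1 - (1 - s)) * a = b - l by rewrite lE; ring.
  lra.
- rewrite frac_int1 // ?lerDl //.
  rewrite IE /J mulrA; apply: ler_wpM2r; first by rewrite invr_ge0 ltW.
  have := @concave_pow R alpha _ _ _ a0 a1 s0 s1 (ltW b0) ha.
  have -> : s * b + (1 - s) * a = a + l by rewrite lE; ring.
  lra.
Qed.
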